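(* Let $(X,T)$ be a topologically transitive topological dynamical system, where $X$ is totally disconnected, and suppose every nonempty open subset of $X$ has positive measure for at least one $T$-invariant Borel probability measure. If $p,q$ are relatively prime positive integers such that $\theta=p/q\in(0,1)$ and $\exp(2\pi i\theta)$ is a continuous eigenvalue of $T$, then there exists a clopen set $U\subseteq X$ such that $q[1_U]=p[1_X]$ in $K^0(X,T)$.
   Context: A topological dynamical system is a compact metric space $X$ with a homeomorphism $T$; topologically transitive means some orbit is dense. A continuous eigenvalue is $\lambda$ with $f\circ T=\lambda f$ for some continuous $f:X\to\mathbb S^1$. $K^0(X,T)=C(X,\mathbb Z)/\{f-f\circ T:f\in C(X,\mathbb Z)\}$, $[f]$ the class of $f$. *)

(* Defs.v *)
From HB Require Import structures.
From mathcomp Require Import all_boot all_order all_algebra.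
From mathcomp Require Import all_classical all_reals all_analysis.
Set Implicit Arguments. Unset Strict Implicit. Unset Printing Implicit Defensive.
Import Order.TTheory GRing.Theory Num.Theory.
Import numFieldTopology.Exports numFieldNormedType.Exports.
Local Open Scope classical_set_scope.
Local Open Scope ring_scope.

Definition borelType (X : ptopologicalType) := g_sigma_algebraType (@open X).

Definition homeomorphism (X : topologicalType) (T Tinv : X -> X) : Prop :=
  [/\ continuous T, continuous Tinv, cancel T Tinv & cancel Tinv T].

Definition orbit (X : Type) (T Tinv : X -> X) (x : X) : set X :=
  [set y | exists n : nat, y = iter n T x \/ y = iter n Tinv x].

Definition top_transitive (X : topologicalType) (T Tinv : X -> X) : Prop :=
  exists x : X, dense (orbit T Tinv x).

Definition invariant_measure (R : realType) (X : ptopologicalType)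
    (T : X -> X) (mu : probability (borelType X) R) : Prop :=
  forall A : set (borelType X), measurable A -> mu (T @^-1` A) = mu A.

(* continuous functions X -> Z (Z discrete) = locally constant functions *)
Definition cont_int (X : topologicalType) (g : X -> int) : Prop :=
  forall x : X, \forall y \near x, g y = g x.

Definition coboundary (X : topologicalType) (T : X -> X) (h : X -> int) : Prop :=
  exists g : X -> int, cont_int g /\ forall x, h x = g x - g (T x).

(* [f1] = [f2] in K^0(X,T) = C(X,Z) / {g - g o T} *)
Definition K0_eq (X : topologicalType) (T : X -> X) (f1 f2 : X -> int) : Prop :=
  coboundary T (fun x => f1 x - f2 x).

(* lambda = exp(i a) (a real) is a continuous eigenvalue of T:
   there is a continuous f : X -> S^1 (S^1 as the unit circle in R^2 = C)
   with f (T x) = exp(i a) * f x (complex multiplication written out). *)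
Definition cont_eigenvalue (R : realType) (X : topologicalType) (T : X -> X)
    (a : R) : Prop :=
  exists f : X -> (R * R)%type, continuous f /\
    (forall x, (f x).1 ^+ 2 + (f x).2 ^+ 2 = 1) /\
    (forall x, f (T x) = (cos a * (f x).1 - sin a * (f x).2,
                          sin a * (f x).1 + cos a * (f x).2)).

(* Main.v *)
Require Import Defs.
From HB Require Import structures.
From mathcomp Require Import all_boot all_order all_algebra.
From mathcomp Require Import all_classical all_reals all_analysis.
From mathcomp Require Import ring lra zify.
Import Order.TTheory GRing.Theory Num.Theory.
Import numFieldTopology.Exports numFieldNormedType.Exports.
Local Open Scope classical_set_scope.
Local Open Scope ring_scope.

Section Rot.
Variable R : realType.

Definition rot (t : R) (v : R * R) : R * R :=
  (cos t * v.1 - sin t * v.2, sin t * v.1 + cos t * v.2).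

Definition nrm (v : R * R) : R := v.1 ^+ 2 + v.2 ^+ 2.

Lemma rotD s t v : rot (s + t) v = rot s (rot t v).
Proof. by rewrite /rot cosD sinD /=; congr (_, _); ring. Qed.

Lemma rot0 v : rot 0 v = v.
Proof. by case: v => a b; rewrite /rot cos0 sin0 /=; congr (_, _); ring. Qed.

Lemma rot_iter (b : R) n v : rot (n%:R * b) v = iter n (rot b) v.
Proof.
elim: n => [|n IH]; first by rewrite mul0r rot0.
by rewrite iterS -IH -natr1 mulrDl mul1r addrC rotD.
Qed.

Lemma nrm_rot t v : nrm (rot t v) = nrm v.
Proof.
rewrite /nrm /rot /=.
have -> : (cos t * v.1 - sin t * v.2) ^+ 2 + (sin t * v.1 + cos t * v.2) ^+ 2
  = (cos t ^+ 2 + sin t ^+ 2) * (v.1 ^+ 2 + v.2 ^+ 2) by ring.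
by rewrite cos2Dsin2 mul1r.
Qed.

Lemma fixed_cos t v : nrm v = 1 -> rot t v = v -> cos t = 1.
Proof.
case: v => a b; rewrite /nrm /rot /= => hn [e1 e2].
have h : cos t * (a ^+ 2 + b ^+ 2) =
  a * (cos t * a - sin t * b) + b * (sin t * a + cos t * b) by ring.
rewrite e1 e2 hn mulr1 in h; rewrite h -hn; ring.
Qed.

Lemma cos_ne1 (q m : nat) : (0 < m)%N -> (m < q)%N ->
  cos (m%:R * (2 * pi / q%:R)) != 1 :> R.
Proof.
move=> m0 mq; apply/eqP => h.
have q0 : (0 : R) < q%:R by rewrite ltr0n; lia.
pose w : R := pi / q%:R.
have w0 : 0 < w by rewrite divr_gt0 // pi_gt0.
have hw : w * q%:R = pi by rewrite /w mulfVK // gt_eqF.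
have e : m%:R * (2 * pi / q%:R) = m%:R * w + m%:R * w by rewrite /w; ring.
rewrite e cosD -!expr2 cos2sin2 in h.
have hs : sin (m%:R * w) ^+ 2 = 0 by lra.
have : 0 < sin (m%:R * w).
  apply: sin_gt0_pi; apply/andP; split.
    by apply: mulr_gt0 => //; rewrite ltr0n.
  rewrite -hw mulrC ltr_pM2l //  ltr_nat //.
by move/eqP: hs; rewrite expf_eq0 /= => /eqP ->; rewrite ltxx.
Qed.

End Rot.
Arguments rot {R}.
Arguments nrm {R}.

Lemma iter_per (A : Type) (g : A -> A) (q : nat) :
  (forall v, iter q g v = v) -> forall n v, iter n g v = iter (n %% q) g v.
Proof.
move=> hq n v; rewrite {1}(divn_eq n q) iterD.
suff -> : forall k w, iter (k * q) g w = w by [].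
elim=> [|k IH] w //; by rewrite mulSn iterD IH hq.
Qed.

Lemma near_all (X : topologicalType) (x : X) (Q : nat -> X -> Prop) n :
  (forall k, (k < n)%N -> \forall z \near x, Q k z) ->
  \forall z \near x, forall k, (k < n)%N -> Q k z.
Proof.
elim: n => [|n IH] H; first by apply: nearW => z k.
have h1 := IH (fun k hk => H k (ltnW hk)).
have h2 := H n (ltnSn n).
apply: filterS (filterI h1 h2) => z [a b] k.
by rewrite ltnS leq_eqVlt => /orP[/eqP->|/a].
Qed.

Theorem mainTheorem7 (R : realType) (X : pseudoPMetricType R) (T Tinv : X -> X)
  (p q : nat) :
  hausdorff_space X ->
  compact [set: X] ->
  homeomorphism T Tinv ->
  top_transitive T Tinv ->
  totally_disconnected [set: X] ->
  (forall O : set X, open O -> O !=set0 ->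
     exists mu : probability (borelType X) R,
       invariant_measure T mu /\ (0 < mu O)%E) ->
  (0 < p)%N -> (0 < q)%N -> coprime p q -> (p < q)%N ->
  cont_eigenvalue T (2 * pi * (p%:R / q%:R) : R) ->
  exists U : set X, clopen U /\
    K0_eq T (fun x => q%:Z * indic U x) (fun x => p%:Z * indic [set: X] x).
Proof.
move=> hH _ [hTc _ TK TinvK] [x0 hd] _ _ p0 q0 cop pq [f [hfc [hfn hfe]]].
pose b : R := 2 * pi / q%:R.
pose rho := rot b.
have qR : (q%:R : R) != 0 by rewrite pnatr_eq0; lia.
have ha : (2 * pi * (p%:R / q%:R) : R) = p%:R * b by rewrite /b; ring.
have hT x : f (T x) = iter p rho (f x).
  transitivity (rot (2 * pi * (p%:R / q%:R)) (f x)); first by rewrite hfe.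
  by rewrite ha rot_iter.
have hq v : iter q rho v = v.
  rewrite -rot_iter.
  have -> : q%:R * b = pi *+ 2 by rewrite /b mulrC mulfVK // mulr_natl.
  by case: v => v1 v2; rewrite /rot cos2pi sin2pi /=; congr (_, _); ring.
have per := @iter_per _ _ _ hq.
have nrm_iter n v : nrm (iter n rho v) = nrm v.
  by elim: n => [|n IH] //=; rewrite nrm_rot.
have uniq_lt j k v : nrm v = 1 -> (j < k)%N -> (k < q)%N ->
    iter j rho v <> iter k rho v.
  move=> hn jk kq e.
  have : cos ((k - j)%:R * b) = 1.
    apply: (@fixed_cos R _ (iter j rho v)); first by rewrite nrm_iter.
    by rewrite rot_iter -iterD subnK ?(ltnW jk) // e.
  by apply/eqP; apply: cos_ne1; lia.
pose c := f x0.
have hc : nrm c = 1 by exact: hfn.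
have uniq j k : (j < q)%N -> (k < q)%N -> iter j rho c = iter k rho c -> j = k.
  move=> jq kq e; case: (ltngtP j k) => // h.
  - by case: (uniq_lt j k c hc h kq e).
  - by case: (uniq_lt k j c hc h jq (esym e)).
have hTinv x : f (Tinv x) = iter ((q - 1) * p) rho (f x).
  have := hT (Tinv x); rewrite TinvK => ->.
  rewrite -iterD per.
  have -> : ((q - 1) * p + p = p * q)%N by nia.
  by rewrite modnMl.
have hTn n x : f (iter n T x) = iter (n * p) rho (f x).
  by elim: n => [|n IH] //=; rewrite hT IH -iterD -mulSn.
have hTinvn n x : f (iter n Tinv x) = iter (n * ((q - 1) * p)) rho (f x).
  by elim: n => [|n IH] //=; rewrite hTinv IH -iterD -mulSn.
have A y v : f y <> v -> \forall z \near y, f z <> v.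
  move=> ne.
  have hO : open (~` [set v]).
    apply: closed_openC; apply: accessible_closed_set1.
    exact: (hausdorff_accessible (@norm_hausdorff _ _)).
  have := hfc y (~` [set v]) (open_nbhs_nbhs (conj hO ne)).
  by [].
pose S := [set y | exists k, (k < q)%N /\ f y = iter k rho c].
have hS y : S y.
  apply: contrapT => nS.
  have hn : \forall z \near y, ~ S z.
    have H1 : forall k, (k < q)%N -> \forall z \near y, f z <> iter k rho c.
      move=> k kq; apply: A => e; apply: nS; by exists k.
    apply: filterS (@near_all _ y (fun k z => f z <> iter k rho c) q H1).
    by move=> z Hz [k [kq e]]; exact: (Hz k kq e).
  have [z [zi zo]] : interior (~` S) `&` Defs.orbit T Tinv x0 !=set0.
    apply: hd; first by exists y.
    exact: open_interior.
  apply: (interior_subset zi).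
  case: zo => n [->|->].
  - by exists ((n * p) %% q)%N; rewrite ltn_pmod // hTn -per.
  - by exists ((n * ((q - 1) * p)) %% q)%N; rewrite ltn_pmod // hTinvn -per.
case: (choice hS) => iota hiota.
have hiT x : iota (T x) = ((iota x + p) %% q)%N.
  apply: uniq; [exact: (hiota (T x)).1 | exact: ltn_pmod |].
  by rewrite -(hiota (T x)).2 hT (hiota x).2 -iterD addnC -per.
have hloc x : \forall z \near x, iota z = iota x.
  have H1 : forall k, (k < q)%N ->
      \forall z \near x, (iter k rho c <> f x -> f z <> iter k rho c).
    move=> k kq; case: (pselect (iter k rho c = f x)) => [e|ne].
      by apply: nearW => z.
    by apply: filterS (A x _ (fun e => ne (esym e))) => z h _.
  apply: filterS (@near_all _ x _ q H1) => z Hz.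
  apply: uniq; [exact: (hiota z).1 | exact: (hiota x).1 |].
  rewrite -(hiota x).2; apply: contrapT => ne.
  exact: (Hz (iota z) (hiota z).1 ne (hiota z).2).
have hopen (P : nat -> Prop) : open [set x | P (iota x)].
  rewrite openE => x Px; rewrite /interior /=.
  apply: filterS (hloc x) => z hz /=; by rewrite hz.
exists [set x | (q - p <= iota x)%N]; split; first split.
- exact: (hopen (fun n => (q - p <= n)%N)).
- rewrite -(setCK [set x | (q - p <= iota x)%N]); apply: open_closedC.
  exact: (hopen (fun n => ~ (q - p <= n)%N)).
- exists (fun x => (iota x)%:Z); split.
    by move=> x; apply: filterS (hloc x) => z ->.
  move=> x; rewrite /indic in_setT.
  have hTx := hiT x; have hx := (hiota x).1.
  case: (pselect ((q - p <= iota x)%N)) => hU.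
    rewrite (mem_set (A := [set x | (q - p <= iota x)%N]) hU) /=.
    have e : ((iota x + p) %% q = iota x + p - q)%N.
      have h : (q <= iota x + p)%N by lia.
      rewrite -{1}(subnK h) modnDr modn_small //; lia.
    rewrite hTx e; lia.
  rewrite (memNset (A := [set x | (q - p <= iota x)%N]) hU) /=.
  have e : ((iota x + p) %% q = iota x + p)%N by rewrite modn_small //; lia.
  rewrite hTx e; lia.
Qed.
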